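(* Let $a,b,d>0$ and $c>c_-$, and let $\phi(x)=\frac{ax^3+bx^2+cx+d}{x^3}$, $x>0$. \begin{description} \item[(a)] If $\phi$ has a unique positive equilibrium $\overline{t}$, then $(\phi(t)-t)(t-\overline{t})<0$ for all $t>0$, $t\neq\overline{t}$. \item[(b)] If $\phi$ has two equilibria $\overline{t}_1<\overline{t}_2$, then for $c=c_M$ $$(\phi(t)-t)(t-\overline{t}_2)<0,\quad t>0,\ t\neq\overline{t}_1,\overline{t}_2,$$ and for $c=c_m$ $$(\phi(t)-t)(t-\overline{t}_1)<0,\quad t>0,\ t\neq\overline{t}_1,\overline{t}_2.$$ \item[(c)] If $\phi$ has three equilibria $\overline{t}_1<\overline{t}_2<\overline{t}_3$, then $$(\phi(t)-t)(t-\overline{t}_1)(t-\overline{t}_2)(t-\overline{t}_3)<0,\quad t>0,\ t\neq\overline{t}_1,\overline{t}_2,\overline{t}_3.$$ \end{description}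
   Context: $c_-$ is the unique negative zero of $Q(x)=4ax^3-b^2x^2-18abd\,x+27a^2d^2+4db^3$; the standing assumption $c>c_-$ guarantees that iterates of $\phi$ from positive points remain positive. Equilibria are points $t>0$ with $\phi(t)=t$, equivalently positive roots of $P(t)=t^4-at^3-bt^2-ct-d$. Let $c^*=-\sqrt{3bd}$ and let $c_b$ be the unique negative root of $H(x)=108x^2+(108ab+27a^3)x-9a^2b^2-32b^3$. When $c_b<\frac{b^2-12d}{3a}$, as the parameter $c$ increases from $c_b$ (with $a,b,d$ fixed), $P$ first acquires a positive double root $t_m$ located at a local minimum of $P$, and later a positive double root $t_M$ located at a local maximum of $P$; $c_m$ and $c_M$ denote the corresponding values of $c$ (one has $c_b<c_m<c_M<c^*$). Two equilibria occur only for $c=c_m$ or $c=c_M$ with $c\in(c_-,c^* )$. *)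

(* Defs.v *)
From Stdlib Require Import Reals.
Open Scope R_scope.

Definition phi (a b c d x : R) : R := (a*x^3 + b*x^2 + c*x + d) / x^3.

Definition is_equilibrium (a b c d t : R) : Prop := 0 < t /\ phi a b c d t = t.

Definition Ppoly (a b c d t : R) : R := t^4 - a*t^3 - b*t^2 - c*t - d.
Definition dPpoly (a b c t : R) : R := 4*t^3 - 3*a*t^2 - 2*b*t - c.

Definition Qpoly (a b d x : R) : R :=
  4*a*x^3 - b^2*x^2 - 18*a*b*d*x + 27*a^2*d^2 + 4*d*b^3.

Definition Hpoly (a b x : R) : R :=
  108*x^2 + (108*a*b + 27*a^3)*x - 9*a^2*b^2 - 32*b^3.

Definition is_c_minus (a b d x : R) : Prop :=
  x < 0 /\ Qpoly a b d x = 0 /\ forall y, y < 0 -> Qpoly a b d y = 0 -> y = x.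

Definition is_c_b (a b x : R) : Prop :=
  x < 0 /\ Hpoly a b x = 0 /\ forall y, y < 0 -> Hpoly a b y = 0 -> y = x.

Definition local_min (f : R -> R) (t : R) : Prop :=
  exists eps, 0 < eps /\ forall s, Rabs (s - t) < eps -> f t <= f s.
Definition local_max (f : R -> R) (t : R) : Prop :=
  exists eps, 0 < eps /\ forall s, Rabs (s - t) < eps -> f s <= f t.

Definition has_double_root_min (a b c d : R) : Prop :=
  exists t, 0 < t /\ Ppoly a b c d t = 0 /\ dPpoly a b c t = 0 /\
            local_min (Ppoly a b c d) t.
Definition has_double_root_max (a b c d : R) : Prop :=
  exists t, 0 < t /\ Ppoly a b c d t = 0 /\ dPpoly a b c t = 0 /\
            local_max (Ppoly a b c d) t.

Definition is_c_m (a b d c : R) : Prop :=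
  exists cb, is_c_b a b cb /\ cb < (b^2 - 12*d) / (3*a) /\ cb < c /\
    has_double_root_min a b c d /\
    forall c', cb < c' < c -> ~ has_double_root_min a b c' d.

Definition is_c_M (a b d c : R) : Prop :=
  exists cb, is_c_b a b cb /\ cb < (b^2 - 12*d) / (3*a) /\ cb < c /\
    has_double_root_max a b c d /\
    forall c', cb < c' < c -> ~ has_double_root_max a b c' d.

(* Main.v *)
Require Import Defs.
From Stdlib Require Import Reals.
From Stdlib Require Import Lra Psatz.
Open Scope R_scope.

Lemma phi_sub a b c d t : 0 < t -> phi a b c d t - t = - Ppoly a b c d t / t^3.
Proof. intros Ht. unfold phi, Ppoly. field. lra. Qed.

Lemma eq_iff a b c d t : 0 < t -> (is_equilibrium a b c d t <-> Ppoly a b c d t = 0).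
Proof.
  intros Ht. unfold is_equilibrium. split.
  - intros [_ H]. assert (E := phi_sub a b c d t Ht). rewrite H in E.
    assert (0 < t^3) by (apply pow_lt; lra).
    assert (Ppoly a b c d t / t^3 = 0) by lra.
    unfold Rdiv in H1. apply Rmult_integral in H1 as [H1|H1]; auto.
    exfalso. apply Rinv_neq_0_compat in H1; lra.
  - intros H. split; auto. assert (E := phi_sub a b c d t Ht).
    rewrite H in E. unfold Rdiv in E. lra.
Qed.

Lemma key a b c d t X : 0 < t -> 0 < Ppoly a b c d t * X -> (phi a b c d t - t) * X < 0.
Proof.
  intros Ht H. rewrite phi_sub by auto.
  assert (0 < t^3) by (apply pow_lt; lra).
  assert (0 < Ppoly a b c d t * X / t^3) by (apply Rdiv_lt_0_compat; auto).
  replace (- Ppoly a b c d t / t ^ 3 * X) with (- (Ppoly a b c d t * X / t^3))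
    by (field; lra). lra.
Qed.

Lemma factor2 a b c d x1 x2 : Ppoly a b c d x1 = 0 -> Ppoly a b c d x2 = 0 -> x1 <> x2 ->
  exists p q, forall t, Ppoly a b c d t = (t - x1) * (t - x2) * (t^2 + p*t + q).
Proof.
  intros H1 H2 Hn.
  set (Q := fun t => t^3 + (x1 - a)*t^2 + (x1^2 - a*x1 - b)*t + (x1^3 - a*x1^2 - b*x1 - c)).
  assert (I1 : forall t, Ppoly a b c d t = (t - x1) * Q t + Ppoly a b c d x1)
    by (intros; unfold Q, Ppoly; ring).
  assert (Q2 : Q x2 = 0).
  { rewrite I1, H1 in H2. assert (x2 - x1 <> 0) by lra.
    rewrite Rplus_0_r in H2. apply Rmult_integral in H2 as [H2|H2]; [lra|lra]. }
  exists (x2 + x1 - a), (x2^2 + (x1-a)*x2 + x1^2 - a*x1 - b).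
  intros t. rewrite I1, H1.
  assert (I2 : Q t = (t - x2) * (t^2 + (x2 + x1 - a)*t + (x2^2 + (x1-a)*x2 + x1^2 - a*x1 - b)) + Q x2)
    by (unfold Q; ring).
  rewrite I2, Q2. ring.
Qed.

Lemma P_large a b c d t : 0 < a -> 0 < b -> 0 < d -> 0 < t ->
  exists M, t < M /\ 0 < Ppoly a b c d M.
Proof.
  intros ha hb hd ht. set (K := a + b + Rabs c + d).
  exists (1 + t + K). set (M := 1 + t + K).
  assert (Hc1 : c <= Rabs c) by apply Rle_abs.
  assert (Hc2 : - c <= Rabs c) by (rewrite <- Rabs_Ropp; apply Rle_abs).
  assert (HK : K < M) by (unfold M, K; lra).
  assert (HM1 : 1 <= M) by (unfold M, K; lra).
  split. unfold M, K; lra.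
  assert (e1 : M <= M^2) by nra.
  assert (e2 : M^2 <= M^3) by (simpl; nra).
  assert (e3 : 1 <= M^3) by lra.
  assert (0 <= Rabs c) by apply Rabs_pos.
  assert (e4 : - c * M <= Rabs c * M^3) by nra.
  assert (e5 : b * M^2 <= b * M^3) by nra.
  assert (e6 : d <= d * M^3) by nra.
  assert (e7 : K * M^3 < M * M^3) by nra.
  unfold Ppoly. replace (M^4) with (M * M^3) by ring. unfold K in e7. nra.
Qed.

Lemma near_point t1 t2 s eps : t1 < t2 -> (s = t1 \/ s = t2) -> 0 < eps ->
  exists x, t1 < x < t2 /\ Rabs (x - s) < eps.
Proof.
  intros H Hs He. set (m := Rmin (eps/2) ((t2-t1)/2)).
  assert (0 < m) by (unfold m; apply Rmin_glb_lt; lra).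
  assert (m <= eps/2) by apply Rmin_l.
  assert (m <= (t2-t1)/2) by apply Rmin_r.
  destruct Hs as [->| ->].
  - exists (t1 + m). split. lra. rewrite Rabs_right; lra.
  - exists (t2 - m). split. lra. rewrite Rabs_left; lra.
Qed.

Lemma sqp x : x <> 0 -> 0 < x^2 /\ 0 < x*x.
Proof. intros H. destruct (Rlt_or_le x 0); [|assert (0<x) by lra]; simpl; split; nra. Qed.

Theorem theorem3 (a b c d cminus : R)
  (ha : 0 < a) (hb : 0 < b) (hd : 0 < d)
  (hcminus : is_c_minus a b d cminus) (hc : cminus < c) :
  (* (a) unique equilibrium *)
  (forall tb, is_equilibrium a b c d tb ->
     (forall t, is_equilibrium a b c d t -> t = tb) ->
     forall t, 0 < t -> t <> tb -> (phi a b c d t - t) * (t - tb) < 0) /\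
  (* (b) exactly two equilibria t1 < t2 *)
  (forall t1 t2, t1 < t2 ->
     (forall t, is_equilibrium a b c d t <-> (t = t1 \/ t = t2)) ->
     (is_c_M a b d c ->
        forall t, 0 < t -> t <> t1 -> t <> t2 ->
          (phi a b c d t - t) * (t - t2) < 0) /\
     (is_c_m a b d c ->
        forall t, 0 < t -> t <> t1 -> t <> t2 ->
          (phi a b c d t - t) * (t - t1) < 0)) /\
  (* (c) exactly three equilibria t1 < t2 < t3 *)
  (forall t1 t2 t3, t1 < t2 -> t2 < t3 ->
     (forall t, is_equilibrium a b c d t <-> (t = t1 \/ t = t2 \/ t = t3)) ->
     forall t, 0 < t -> t <> t1 -> t <> t2 -> t <> t3 ->
       (phi a b c d t - t) * (t - t1) * (t - t2) * (t - t3) < 0).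
Proof.
  assert (P0 : Ppoly a b c d 0 = - d) by (unfold Ppoly; ring).
  assert (Pcont : continuity (Ppoly a b c d)) by (unfold Ppoly; reg).
  split; [|split].
  -
    intros tb Htb Huniq t Ht Hne.
    destruct Htb as [Htb0 Htb']. assert (Ptb := proj1 (eq_iff a b c d tb Htb0) (conj Htb0 Htb')).
    assert (Pt : Ppoly a b c d t <> 0).
    { intro E. apply Hne, Huniq, (proj2 (eq_iff a b c d t Ht)), E. }
    apply key; auto.
    destruct (Rlt_or_le t tb) as [Hlt|Hle].
    + destruct (Rlt_or_le (Ppoly a b c d t) 0) as [Hn|Hp].
      * nra.
      * exfalso. destruct (IVT (Ppoly a b c d) 0 t Pcont Ht) as [z [Hz Pz]]; [lra|lra|].
        assert (z <> 0) by (intro; subst; lra).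
        assert (Hz0 : 0 < z) by lra.
        assert (z = tb) by (apply Huniq, (proj2 (eq_iff a b c d z Hz0)), Pz). lra.
    + assert (tb < t) by lra.
      destruct (Rlt_or_le (Ppoly a b c d t) 0) as [Hn|Hp].
      * exfalso. destruct (P_large a b c d t ha hb hd Ht) as [M [HM PM]].
        destruct (IVT (Ppoly a b c d) t M Pcont HM Hn PM) as [z [Hz Pz]].
        assert (Hz0 : 0 < z) by lra.
        assert (z = tb) by (apply Huniq, (proj2 (eq_iff a b c d z Hz0)), Pz). lra.
      * nra.
  -
    intros t1 t2 H12 Heq.
    assert (E1 : is_equilibrium a b c d t1) by (apply Heq; auto).
    assert (E2 : is_equilibrium a b c d t2) by (apply Heq; auto).
    pose proof (proj1 E1) as h1. pose proof (proj1 E2) as h2.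
    assert (P1 : Ppoly a b c d t1 = 0) by (apply (eq_iff a b c d t1 h1); auto).
    assert (P2 : Ppoly a b c d t2 = 0) by (apply (eq_iff a b c d t2 h2); auto).
    destruct (factor2 a b c d t1 t2 P1 P2 ltac:(lra)) as [p [q F]].
    assert (Hq : q < 0).
    { specialize (F 0). rewrite P0 in F. assert (E0 : - d = (t1*t2)*q) by (rewrite F; ring).
      assert (0 < t1*t2) by nra. nra. }
    set (s := sqrt (p^2 - 4*q)).
    assert (Hs0 : 0 <= s) by apply sqrt_pos.
    assert (Hs2 : s * s = p^2 - 4*q) by (apply sqrt_sqrt; nra).
    set (r1 := (-p - s)/2). set (r2 := (-p + s)/2).
    assert (Hsp : p < s) by nra.
    assert (Hsp' : - p < s) by nra.
    assert (Hr1 : r1 < 0) by (unfold r1; lra).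
    assert (Hr2 : 0 < r2) by (unfold r2; lra).
    assert (G : forall t, t^2 + p*t + q = (t - r1) * (t - r2)).
    { intros t. unfold r1, r2. assert (q = (p^2 - s*s)/4) by lra. rewrite H. field. }
    assert (Pr2 : Ppoly a b c d r2 = 0) by (rewrite F, G; ring).
    assert (Hr2e : r2 = t1 \/ r2 = t2) by (apply Heq, (eq_iff a b c d r2 Hr2), Pr2).
    destruct Hr2e as [Er | Er].
    +
      assert (F' : forall t, Ppoly a b c d t = (t - t1)^2 * (t - t2) * (t - r1))
        by (intros t; rewrite F, G, Er; ring).
      split.
      * intros _ t Ht n1 n2. apply key; auto. rewrite F'.
        destruct (sqp (t-t1)) as [? ?]; [lra|].
        destruct (sqp (t-t2)) as [? ?]; [lra|].
        assert (0 < (t-t1)^2 * ((t-t2)*(t-t2))) by nra. nra.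
      * intros [cb [_ [_ [_ [[u [hu [Pu [_ [eps [heps Hmin]]]]]] _]]]]].
        exfalso.
        assert (Hu : u = t1 \/ u = t2) by (apply Heq, (eq_iff a b c d u hu), Pu).
        destruct (near_point t1 t2 u eps H12 Hu heps) as [x [Hx Hxe]].
        specialize (Hmin x Hxe). rewrite Pu, F' in Hmin.
        destruct (sqp (x-t1)) as [? ?]; [lra|].
        assert ((x-t2)*(x-r1) < 0) by nra. rewrite Rmult_assoc in Hmin. nra.
    +
      assert (F' : forall t, Ppoly a b c d t = (t - t1) * (t - t2)^2 * (t - r1))
        by (intros t; rewrite F, G, Er; ring).
      split.
      * intros [cb [_ [_ [_ [[u [hu [Pu [_ [eps [heps Hmax]]]]]] _]]]]].
        exfalso.
        assert (Hu : u = t1 \/ u = t2) by (apply Heq, (eq_iff a b c d u hu), Pu).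
        destruct (near_point t1 t2 u eps H12 Hu heps) as [x [Hx Hxe]].
        specialize (Hmax x Hxe). rewrite Pu, F' in Hmax.
        destruct (sqp (x-t2)) as [? ?]; [lra|].
        assert (0 < (x-t1)*(x-r1)) by nra.
        replace ((x - t1) * (x - t2) ^ 2 * (x - r1)) with ((x-t2)^2 * ((x-t1)*(x-r1))) in Hmax by ring. nra.
      * intros _ t Ht n1 n2. apply key; auto. rewrite F'.
        destruct (sqp (t-t1)) as [? ?]; [lra|].
        destruct (sqp (t-t2)) as [? ?]; [lra|].
        assert (0 < (t-t2)^2 * ((t-t1)*(t-t1))) by nra. nra.
  -
    intros t1 t2 t3 H12 H23 Heq t Ht n1 n2 n3.
    assert (E1 : is_equilibrium a b c d t1) by (apply Heq; auto).
    assert (E2 : is_equilibrium a b c d t2) by (apply Heq; auto).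
    assert (E3 : is_equilibrium a b c d t3) by (apply Heq; auto).
    pose proof (proj1 E1) as h1. pose proof (proj1 E2) as h2. pose proof (proj1 E3) as h3.
    assert (P1 : Ppoly a b c d t1 = 0) by (apply (eq_iff a b c d t1 h1); auto).
    assert (P2 : Ppoly a b c d t2 = 0) by (apply (eq_iff a b c d t2 h2); auto).
    assert (P3 : Ppoly a b c d t3 = 0) by (apply (eq_iff a b c d t3 h3); auto).
    destruct (factor2 a b c d t1 t2 P1 P2 ltac:(lra)) as [p [q F]].
    assert (Hq : q < 0).
    { specialize (F 0). rewrite P0 in F. assert (E0 : - d = (t1*t2)*q) by (rewrite F; ring).
      assert (0 < t1*t2) by nra. nra. }
    assert (g3 : t3^2 + p*t3 + q = 0).
    { rewrite F in P3. assert (0 < (t3 - t1) * (t3 - t2)) by nra.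
      apply Rmult_integral in P3 as [P3|P3]; [lra|lra]. }
    assert (G : forall t, t^2 + p*t + q = (t - t3) * (t + p + t3)).
    { intros u. transitivity ((u - t3) * (u + p + t3) + (t3^2 + p*t3 + q)); [ring|].
      rewrite g3; ring. }
    assert (Hr : 0 < p + t3) by (specialize (G 0); nra).
    rewrite Rmult_assoc, Rmult_assoc. apply key; auto.
    rewrite F, G.
    assert (0 < t + p + t3) by lra.
    assert (Hne : (t-t1)*(t-t2)*(t-t3) <> 0) by
         (apply Rmult_integral_contrapositive; split;
            [apply Rmult_integral_contrapositive; split|]; lra).
    destruct (sqp _ Hne) as [Hsq _].
    match goal with |- 0 < ?e => replace e with (((t-t1)*(t-t2)*(t-t3))^2 * (t+p+t3)) by ring end.
    nra.
Qed.
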